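(* Let $d:\mathbb{Z}\to\mathbb{C}$ be bounded and let $J$ be the operator on $\ell^2(\mathbb{Z})$ given by $(Ju)(n)=u(n-1)+d(n)u(n)+u(n+1)$. If $J$ has a boundary eigenvalue with imaginary part $b$, then (i) for every $n\in\mathbb{Z}$, $\Im(d(n))=b$ or $\Im(d(n+1))=b$; (ii) every boundary eigenvalue of $J$ has imaginary part $b$.
   Context: The numerical range is $\operatorname{Num}(J)=\{\langle Ju,u\rangle:\|u\|=1\}$, and a boundary eigenvalue of $J$ is an eigenvalue of $J$ lying in the topological boundary of $\operatorname{Num}(J)$. *)

(* Defs.v *)
From Stdlib Require Import Reals ZArith.
Open Scope R_scope.

Record Cpx := mkC { Re : R ; Im : R }.

Definition Cadd (z w : Cpx) : Cpx := mkC (Re z + Re w) (Im z + Im w).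
Definition Cmul (z w : Cpx) : Cpx :=
  mkC (Re z * Re w - Im z * Im w) (Re z * Im w + Im z * Re w).
Definition Cconj (z : Cpx) : Cpx := mkC (Re z) (- Im z).
Definition Cscale (a : Cpx) (z : Cpx) : Cpx := Cmul a z.
Definition Cnorm2 (z : Cpx) : R := Re z * Re z + Im z * Im z.
Definition Cabs (z : Cpx) : R := sqrt (Cnorm2 z).
Definition Cdist (z w : Cpx) : R := sqrt ((Re z - Re w)^2 + (Im z - Im w)^2).

(* two-sided series over Z: sum_{n in Z} f n = l, via the symmetric
   partial sums  sum_{k=0}^{N} (f k + f (-k-1)). *)
Definition Zsum (f : Z -> R) (l : R) : Prop :=
  infinite_sum (fun k => f (Z.of_nat k) + f (- Z.of_nat k - 1)%Z) l.

Definition ZsumC (f : Z -> Cpx) (l : Cpx) : Prop :=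
  Zsum (fun n => Re (f n)) (Re l) /\ Zsum (fun n => Im (f n)) (Im l).

Definition in_l2 (u : Z -> Cpx) : Prop := exists s, Zsum (fun n => Cnorm2 (u n)) s.

Definition unit_l2 (u : Z -> Cpx) : Prop := Zsum (fun n => Cnorm2 (u n)) 1.

Definition inner_is (f g : Z -> Cpx) (z : Cpx) : Prop :=
  ZsumC (fun n => Cmul (f n) (Cconj (g n))) z.

Definition bounded_seq (d : Z -> Cpx) : Prop := exists M, forall n, Cabs (d n) <= M.

Definition Jop (d : Z -> Cpx) (u : Z -> Cpx) : Z -> Cpx :=
  fun n => Cadd (Cadd (u (n - 1)%Z) (Cmul (d n) (u n))) (u (n + 1)%Z).

Definition NumRange (d : Z -> Cpx) (z : Cpx) : Prop :=
  exists u, unit_l2 u /\ inner_is (Jop d u) u z.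

Definition closureC (S : Cpx -> Prop) (z : Cpx) : Prop :=
  forall eps, eps > 0 -> exists w, S w /\ Cdist z w < eps.
Definition interiorC (S : Cpx -> Prop) (z : Cpx) : Prop :=
  exists eps, eps > 0 /\ forall w, Cdist z w < eps -> S w.
Definition boundaryC (S : Cpx -> Prop) (z : Cpx) : Prop :=
  closureC S z /\ ~ interiorC S z.

Definition eigenvalue (d : Z -> Cpx) (lam : Cpx) : Prop :=
  exists u, in_l2 u /\ (exists n, u n <> mkC 0 0) /\
            forall n, Jop d u n = Cmul lam (u n).

Definition boundary_eigenvalue (d : Z -> Cpx) (lam : Cpx) : Prop :=
  eigenvalue d lam /\ boundaryC (NumRange d) lam.

(* Main.v *)
Require Import Defs.
From Stdlib Require Import Reals ZArith Lra Lia Psatz Classical.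
Open Scope R_scope.

Lemma inf_cv s l : infinite_sum s l <-> Un_cv (fun n => sum_f_R0 s n) l.
Proof. split; intro H; exact H. Qed.

Lemma inf_plus f g l1 l2 : infinite_sum f l1 -> infinite_sum g l2 ->
  infinite_sum (fun k => f k + g k) (l1 + l2).
Proof.
  rewrite !inf_cv; intros H1 H2.
  eapply Un_cv_ext. 2: apply (CV_plus _ _ _ _ H1 H2).
  intro n; simpl. now rewrite plus_sum.
Qed.

Lemma inf_scal f l a : infinite_sum f l -> infinite_sum (fun k => a * f k) (a * l).
Proof.
  rewrite !inf_cv; intros H1.
  assert (Hc : Un_cv (fun _ : nat => a) a).
  { intros e He; exists 0%nat; intros; unfold R_dist; rewrite Rminus_diag, Rabs_R0; lra. }
  eapply Un_cv_ext. 2: apply (CV_mult (fun _ => a) _ a _ Hc H1).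
  intro n; simpl. rewrite scal_sum. apply sum_eq. intros; ring.
Qed.

Lemma inf_ext f g l : (forall k, f k = g k) -> infinite_sum f l -> infinite_sum g l.
Proof.
  rewrite !inf_cv; intros E H1. eapply Un_cv_ext. 2: apply H1.
  intro n. apply sum_eq. intros; auto.
Qed.

Lemma sum_delta (K : nat) b n :
  sum_f_R0 (fun j => if Nat.eq_dec j K then b else 0) n =
  if Nat.leb K n then b else 0.
Proof.
  induction n as [|n IH].
  - simpl. destruct (Nat.eq_dec 0 K); destruct K; simpl; auto; lia.
  - rewrite tech5, IH. destruct (Nat.eq_dec (S n) K) as [e|e].
    + subst. destruct (Nat.leb_spec (S n) n); destruct (Nat.leb_spec (S n) (S n)); try lra; lia.
    + destruct (Nat.leb_spec K n); destruct (Nat.leb_spec K (S n)); try lra; lia.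
Qed.

Lemma inf_delta (K : nat) b :
  infinite_sum (fun j => if Nat.eq_dec j K then b else 0) b.
Proof.
  intros eps He. exists K. intros n Hn. rewrite sum_delta.
  destruct (Nat.leb_spec K n); [|lia]. unfold Rdist.
  replace (b - b) with 0 by ring. rewrite Rabs_R0. lra.
Qed.

Definition Zsum_plus f g l1 l2 (H1 : Zsum f l1) (H2 : Zsum g l2) :
  Zsum (fun k => f k + g k) (l1 + l2).
Proof.
  unfold Zsum in *. eapply inf_ext. 2: apply (inf_plus _ _ _ _ H1 H2).
  intro k; simpl; ring.
Qed.

Lemma Zsum_scal f l a : Zsum f l -> Zsum (fun k => a * f k) (a * l).
Proof.
  unfold Zsum; intro H. eapply inf_ext. 2: apply (inf_scal _ _ a H).
  intro k; simpl; ring.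
Qed.

Lemma Zsum_ext f g l : (forall k, f k = g k) -> Zsum f l -> Zsum g l.
Proof.
  unfold Zsum; intros E H. eapply inf_ext. 2: apply H.
  intro k; simpl; rewrite !E; ring.
Qed.

Lemma Zsum_delta (m : Z) (F : Z -> R) :
  Zsum (fun k => if Z.eq_dec k m then F k else 0) (F m).
Proof.
  unfold Zsum.
  destruct (Z_le_dec 0 m) as [Hm|Hm].
  - apply inf_ext with (f := fun j => if Nat.eq_dec j (Z.to_nat m) then F m else 0).
    2: apply inf_delta.
    intro j. destruct (Nat.eq_dec j (Z.to_nat m)) as [e|e];
    destruct (Z.eq_dec (Z.of_nat j) m) as [e1|e1];
    destruct (Z.eq_dec (- Z.of_nat j - 1) m) as [e2|e2]; try lia.
    + subst m; ring.
    + ring.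
  - apply inf_ext with (f := fun j => if Nat.eq_dec j (Z.to_nat (- m - 1)) then F m else 0).
    2: apply inf_delta.
    intro j. destruct (Nat.eq_dec j (Z.to_nat (-m-1))) as [e|e];
    destruct (Z.eq_dec (Z.of_nat j) m) as [e1|e1];
    destruct (Z.eq_dec (- Z.of_nat j - 1) m) as [e2|e2]; try lia.
    + rewrite <- e2; ring.
    + ring.
Qed.

Definition C0 := mkC 0 0.

Lemma Cpx_eq z w : Re z = Re w -> Im z = Im w -> z = w.
Proof. destruct z, w; simpl; intros; subst; reflexivity. Qed.

Lemma Cnorm2_nonneg z : 0 <= Cnorm2 z.
Proof. unfold Cnorm2; nra. Qed.

Lemma Cnorm2_pos z : z <> C0 -> 0 < Cnorm2 z.
Proof.
  intro H. unfold Cnorm2. destruct (Req_dec (Re z) 0); destruct (Req_dec (Im z) 0).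
  - exfalso; apply H; apply Cpx_eq; simpl; auto.
  - nra. - nra. - nra.
Qed.

Lemma Cnorm2_zero z : Cnorm2 z = 0 -> z = C0.
Proof. unfold Cnorm2; intro; apply Cpx_eq; simpl; nra. Qed.

Lemma eig_re d lam u k : Jop d u k = Cmul lam (u k) ->
  Re (u (k+1)%Z) = Re lam * Re (u k) - Im lam * Im (u k)
     - Re (u (k-1)%Z) - (Re (d k) * Re (u k) - Im (d k) * Im (u k)).
Proof. intro H. apply (f_equal Re) in H. unfold Jop in H; simpl in H. lra. Qed.

Lemma eig_im d lam u k : Jop d u k = Cmul lam (u k) ->
  Im (u (k+1)%Z) = Re lam * Im (u k) + Im lam * Re (u k)
     - Im (u (k-1)%Z) - (Re (d k) * Im (u k) + Im (d k) * Re (u k)).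
Proof. intro H. apply (f_equal Im) in H. unfold Jop in H; simpl in H. lra. Qed.

Lemma eig_re' d lam u k : Jop d u k = Cmul lam (u k) ->
  Re (u (k-1)%Z) = Re lam * Re (u k) - Im lam * Im (u k)
     - Re (u (k+1)%Z) - (Re (d k) * Re (u k) - Im (d k) * Im (u k)).
Proof. intro H. apply (f_equal Re) in H. unfold Jop in H; simpl in H. lra. Qed.

Lemma eig_im' d lam u k : Jop d u k = Cmul lam (u k) ->
  Im (u (k-1)%Z) = Re lam * Im (u k) + Im lam * Re (u k)
     - Im (u (k+1)%Z) - (Re (d k) * Im (u k) + Im (d k) * Re (u k)).
Proof. intro H. apply (f_equal Im) in H. unfold Jop in H; simpl in H. lra. Qed.

Lemma no_two_zeros d lam u n :
  (forall k, Jop d u k = Cmul lam (u k)) -> u n = C0 -> u (n+1)%Z = C0 ->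
  forall k, u k = C0.
Proof.
  intros E H0 H1.
  assert (Up : forall j : nat, u (n + Z.of_nat j)%Z = C0 /\ u (n + Z.of_nat j + 1)%Z = C0).
  { induction j as [|j [IH1 IH2]].
    - simpl. replace (n+0)%Z with n by lia. auto.
    - replace (n + Z.of_nat (S j))%Z with (n + Z.of_nat j + 1)%Z by lia. split; auto.
      set (m := (n + Z.of_nat j + 1)%Z).
      assert (Hm1 : u (m - 1)%Z = C0) by (unfold m; replace (n + Z.of_nat j + 1 - 1)%Z with (n + Z.of_nat j)%Z by lia; auto).
      apply Cpx_eq; simpl.
      + rewrite (eig_re _ _ _ _ (E m)). fold m in IH2. rewrite IH2, Hm1. simpl. ring.
      + rewrite (eig_im _ _ _ _ (E m)). fold m in IH2. rewrite IH2, Hm1. simpl. ring. }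
  assert (Dn : forall j : nat, u (n - Z.of_nat j)%Z = C0 /\ u (n - Z.of_nat j + 1)%Z = C0).
  { induction j as [|j [IH1 IH2]].
    - simpl. replace (n-0)%Z with n by lia. auto.
    - replace (n - Z.of_nat (S j) + 1)%Z with (n - Z.of_nat j)%Z by lia. split; auto.
      set (m := (n - Z.of_nat j)%Z).
      assert (Hm1 : u (m + 1)%Z = C0) by (unfold m; auto).
      replace (n - Z.of_nat (S j))%Z with (m - 1)%Z by (unfold m; lia).
      apply Cpx_eq; simpl.
      + rewrite (eig_re' _ _ _ _ (E m)). fold m in IH1. rewrite IH1, Hm1. simpl. ring.
      + rewrite (eig_im' _ _ _ _ (E m)). fold m in IH1. rewrite IH1, Hm1. simpl. ring. }
  intro k. destruct (Z_le_dec n k).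
  - destruct (Up (Z.to_nat (k - n))) as [H _]. rewrite Z2Nat.id in H by lia.
    replace (n + (k - n))%Z with k in H by lia. exact H.
  - destruct (Dn (Z.to_nat (n - k))) as [H _]. rewrite Z2Nat.id in H by lia.
    replace (n - (n - k))%Z with k in H by lia. exact H.
Qed.

Lemma one_of_two d lam u n :
  (forall k, Jop d u k = Cmul lam (u k)) -> (exists m, u m <> C0) ->
  u n <> C0 \/ u (n+1)%Z <> C0.
Proof.
  intros E [m Hm]. destruct (classic (u n = C0)) as [h0|h0]; auto.
  destruct (classic (u (n+1)%Z = C0)) as [h1|h1]; auto.
  exfalso; apply Hm. exact (no_two_zeros d lam u n E h0 h1 m).
Qed.

Lemma Zsum_term_le f l m : (forall k, 0 <= f k) -> Zsum f l -> f m <= l.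
Proof.
  intros Hf H. unfold Zsum in H.
  set (h := fun k : nat => f (Z.of_nat k) + f (- Z.of_nat k - 1)%Z) in H.
  assert (Hh : forall k, 0 <= h k) by (intro; unfold h; generalize (Hf (Z.of_nat k)) (Hf (- Z.of_nat k - 1)%Z); lra).
  assert (key : forall K, f m <= h K -> f m <= l).
  { intros K HK. apply Rle_trans with (sum_f_R0 h K).
    - destruct K. simpl; auto. rewrite tech5. generalize (cond_pos_sum h K Hh). lra.
    - apply sum_incr; auto. }
  destruct (Z_le_dec 0 m).
  - apply (key (Z.to_nat m)). unfold h. rewrite Z2Nat.id by lia.
    generalize (Hf (- m - 1)%Z); lra.
  - apply (key (Z.to_nat (-m-1))). unfold h. rewrite Z2Nat.id by lia.
    replace (- (- m - 1) - 1)%Z with m by lia.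
    generalize (Hf (- m - 1)%Z); lra.
Qed.

Lemma Zsum_const f l c : Zsum f l -> (forall k : nat, f (Z.of_nat k) + f (- Z.of_nat k - 1)%Z = c) -> c = 0.
Proof.
  intros H Hc. unfold Zsum in H.
  destruct (Req_dec c 0) as [|Hne]; auto. exfalso.
  destruct (H (Rabs c / 2)) as [N HN]. { generalize (Rabs_pos_lt c Hne); lra. }
  generalize (HN N (le_n _)) (HN (S N) (le_S _ _ (le_n _))). rewrite tech5. rewrite Hc.
  unfold Rdist. intros h1 h2.
  set (x := sum_f_R0 _ N) in *.
  assert (Rabs c <= Rabs (x + c - l) + Rabs (x - l)).
  { replace c with ((x + c - l) + - (x - l)) at 1 by ring.
    eapply Rle_trans. apply Rabs_triang. rewrite Rabs_Ropp. lra. }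
  lra.
Qed.

Lemma exists_pair d lam u : in_l2 u -> (forall k, Jop d u k = Cmul lam (u k)) ->
  (exists m, u m <> C0) -> exists n, u n <> C0 /\ u (n+1)%Z <> C0.
Proof.
  intros [Ssum HS] E [m Hm]. apply NNPP. intro H.
  assert (H' : forall n, u n = C0 \/ u (n+1)%Z = C0).
  { intro n. destruct (classic (u n = C0)); auto. destruct (classic (u (n+1)%Z = C0)); auto.
    exfalso; apply H; exists n; auto. }
  set (f := fun k => Cnorm2 (u k)) in *.
  assert (per2 : forall k, f (k+2)%Z = f k).
  { intro k. unfold f. destruct (classic (u (k+1)%Z = C0)) as [h|h].
    - pose proof (eig_re _ _ _ _ (E (k+1)%Z)) as e1.
      pose proof (eig_im _ _ _ _ (E (k+1)%Z)) as e2.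
      replace (k+1+1)%Z with (k+2)%Z in e1, e2 by lia.
      replace (k+1-1)%Z with k in e1, e2 by lia.
      rewrite h in e1, e2; simpl in e1, e2. unfold Cnorm2. rewrite e1, e2. ring.
    - destruct (H' k) as [h0|h0]; [|contradiction].
      destruct (H' (k+1)%Z) as [h2|h2]; [contradiction|].
      replace (k+1+1)%Z with (k+2)%Z in h2 by lia. rewrite h0, h2. reflexivity. }
  assert (perZ : forall i : nat, forall a, f (a + 2 * Z.of_nat i)%Z = f a).
  { induction i as [|i IH]; intro a.
    - replace (a + 2 * Z.of_nat 0)%Z with a by lia; reflexivity.
    - replace (a + 2 * Z.of_nat (S i))%Z with ((a + 2 * Z.of_nat i) + 2)%Z by lia.
      rewrite per2; auto. }
  set (g := fun a => f a + f (a+1)%Z).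
  assert (gS : forall a, g (a+1)%Z = g a).
  { intro a; unfold g. replace (a+1+1)%Z with (a+2)%Z by lia. rewrite per2. ring. }
  assert (gc : forall j : nat, g (Z.of_nat j) = g 0%Z).
  { induction j as [|j IH]. reflexivity. rewrite Nat2Z.inj_succ, <- Z.add_1_r, gS. auto. }
  assert (hj : forall j : nat, f (Z.of_nat j) + f (- Z.of_nat j - 1)%Z = g 0%Z).
  { intro j. rewrite <- (gc j). unfold g.
    rewrite <- (perZ (S j) (- Z.of_nat j - 1)%Z).
    rewrite Nat2Z.inj_succ. f_equal. f_equal. lia. }
  pose proof (Zsum_const _ _ _ HS hj) as g0.
  assert (fz : forall k, f k = 0).
  { intro k. assert (forall k, 0 <= f k) by (intro; apply Cnorm2_nonneg).
    destruct (Z_le_dec 0 k).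
    - pose proof (hj (Z.to_nat k)). rewrite Z2Nat.id in H1 by lia.
      generalize (H0 k) (H0 (- k - 1)%Z). lra.
    - pose proof (hj (Z.to_nat (- k - 1))). rewrite Z2Nat.id in H1 by lia.
      replace (- (- k - 1) - 1)%Z with k in H1 by lia.
      generalize (H0 k) (H0 (- k - 1)%Z). lra. }
  apply Hm. apply Cnorm2_zero. apply fz.
Qed.

Definition Crs (a : R) (z : Cpx) : Cpx := mkC (a * Re z) (a * Im z).

Definition ypert (c : R) (al t : Cpx) (u : Z -> Cpx) (n : Z) (k : Z) : Cpx :=
  Crs c (Cadd (Cmul al (u k)) (if Z.eq_dec k n then t else C0)).

Definition X0 (al t lam : Cpx) (d u : Z -> Cpx) (k : Z) : Cpx :=
  Cadd (Cadd (Cmul (Cmul al lam) (Cmul (u k) (Cconj t)))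
             (Cmul (Cmul t (Cconj al)) (Cmul (Cconj (u k)) (d k))))
       (Crs (Cnorm2 t) (d k)).
Definition X1 (al t : Cpx) (u : Z -> Cpx) (k : Z) : Cpx :=
  Cmul (Cmul t (Cconj al)) (Cconj (u k)).

Lemma norm_decomp c al t u n k :
  Cnorm2 (ypert c al t u n k) = c*c*Cnorm2 al * Cnorm2 (u k) +
   (if Z.eq_dec k n then c*c*(2*Re (Cmul (Cmul al (u k)) (Cconj t)) + Cnorm2 t) else 0).
Proof. unfold ypert, Cnorm2. destruct (Z.eq_dec k n); simpl; ring. Qed.

Lemma inner_decomp d lam u c al t n :
  (forall k, Jop d u k = Cmul lam (u k)) -> forall k,
  Cmul (Jop d (ypert c al t u n) k) (Cconj (ypert c al t u n k)) =
  Cadd (Crs (c*c*Cnorm2 al*Cnorm2 (u k)) lam)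
   (Cadd (if Z.eq_dec k n then Crs (c*c) (X0 al t lam d u k) else C0)
    (Cadd (if Z.eq_dec k (n+1) then Crs (c*c) (X1 al t u k) else C0)
          (if Z.eq_dec k (n-1) then Crs (c*c) (X1 al t u k) else C0))).
Proof.
  intros E k. unfold Jop, ypert, X0, X1.
  pose proof (eig_re _ _ _ _ (E k)) as e1.
  pose proof (eig_im _ _ _ _ (E k)) as e2.
  destruct (Z.eq_dec (k-1) n); destruct (Z.eq_dec k n); destruct (Z.eq_dec (k+1) n);
  destruct (Z.eq_dec k (n+1)); destruct (Z.eq_dec k (n-1)); try lia;
  apply Cpx_eq; unfold Cnorm2; simpl; rewrite e1, e2; ring.
Qed.

Lemma Re_if (b : bool) X : Re (if b then X else C0) = if b then Re X else 0.
Proof. destruct b; reflexivity. Qed.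
Lemma Im_if (b : bool) X : Im (if b then X else C0) = if b then Im X else 0.
Proof. destruct b; reflexivity. Qed.
Lemma Re_ifs {P Q : Prop} (b : {P}+{Q}) X : Re (if b then X else C0) = if b then Re X else 0.
Proof. destruct b; reflexivity. Qed.
Lemma Im_ifs {P Q : Prop} (b : {P}+{Q}) X : Im (if b then X else C0) = if b then Im X else 0.
Proof. destruct b; reflexivity. Qed.

Lemma Zsum_val f l l' : Zsum f l -> l = l' -> Zsum f l'.
Proof. intros H ->; exact H. Qed.

Lemma Zsum3 f l a m1 m2 m3 F1 F2 F3 : Zsum f l ->
  Zsum (fun k => a * f k + (if Z.eq_dec k m1 then F1 k else 0)
     + (if Z.eq_dec k m2 then F2 k else 0) + (if Z.eq_dec k m3 then F3 k else 0))
   (a * l + F1 m1 + F2 m2 + F3 m3).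
Proof.
  intro H. repeat apply Zsum_plus; try apply Zsum_delta. apply Zsum_scal; auto.
Qed.

Lemma Zsum1 f l a m1 F1 : Zsum f l ->
  Zsum (fun k => a * f k + (if Z.eq_dec k m1 then F1 k else 0)) (a * l + F1 m1).
Proof.
  intro H. repeat apply Zsum_plus; try apply Zsum_delta. apply Zsum_scal; auto.
Qed.

Lemma normalize d lam u n : in_l2 u -> (forall k, Jop d u k = Cmul lam (u k)) ->
  u n <> C0 -> exists v, unit_l2 v /\ (forall k, Jop d v k = Cmul lam (v k)) /\ v n <> C0.
Proof.
  intros [S HS] E Hn.
  assert (Spos : 0 < S).
  { apply Rlt_le_trans with (Cnorm2 (u n)). apply Cnorm2_pos; auto.
    apply (Zsum_term_le (fun k => Cnorm2 (u k))); auto. intro; apply Cnorm2_nonneg. }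
  set (c := / sqrt S).
  assert (cc : c * c * S = 1).
  { unfold c. rewrite <- Rinv_mult, sqrt_sqrt by lra. field. lra. }
  assert (cne : c <> 0). { intro h; rewrite h in cc; lra. }
  exists (fun k => Crs c (u k)). repeat split.
  - unfold unit_l2. rewrite <- cc.
    apply Zsum_ext with (f := fun k => (c*c) * Cnorm2 (u k)).
    + intro k; unfold Cnorm2, Crs; simpl; ring.
    + apply Zsum_scal; auto.
  - intro k. pose proof (E k) as Ek. apply (f_equal Re) in Ek as e1. apply (f_equal Im) in Ek as e2.
    unfold Jop, Crs in *; simpl in *. apply Cpx_eq; simpl.
    + replace (c * Re (u (k - 1)%Z) + (Re (d k) * (c * Re (u k)) - Im (d k) * (c * Im (u k))) +
   c * Re (u (k + 1)%Z)) with (c * (Re (u (k - 1)%Z) + (Re (d k) * Re (u k) - Im (d k) * Im (u k)) +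
   Re (u (k + 1)%Z))) by ring. rewrite e1. ring.
    + replace (c * Im (u (k - 1)%Z) + (Re (d k) * (c * Im (u k)) + Im (d k) * (c * Re (u k))) +
   c * Im (u (k + 1)%Z)) with (c * (Im (u (k - 1)%Z) + (Re (d k) * Im (u k) + Im (d k) * Re (u k)) +
   Im (u (k + 1)%Z))) by ring. rewrite e2. ring.
  - intro h. apply Hn. apply (f_equal Cnorm2) in h. unfold Crs, Cnorm2, C0 in h; simpl in h.
    apply Cnorm2_zero. unfold Cnorm2.
    assert (c*c*(Re (u n) * Re (u n) + Im (u n) * Im (u n)) = 0) by nra.
    apply Rmult_integral in H as [H|H]; auto. exfalso; apply Rmult_integral in H as [|]; auto.
Qed.

Definition alf (t un : Cpx) := mkC (1 - (Re t * Re un + Im t * Im un)) (Re t * Im un - Im t * Re un).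

Lemma key_norm t un :
  Cnorm2 (alf t un) + 2 * Re (Cmul (Cmul (alf t un) un) (Cconj t)) + Cnorm2 t
  = 1 + Cnorm2 t * (1 - Cnorm2 un).
Proof. unfold alf, Cnorm2; simpl; ring. Qed.

Lemma key_re d lam u n t : Jop d u n = Cmul lam (u n) ->
  Cnorm2 (alf t (u n)) * Re lam + Re (X0 (alf t (u n)) t lam d u n)
   + Re (X1 (alf t (u n)) t u (n+1)) + Re (X1 (alf t (u n)) t u (n-1)) =
  Re lam * (1 + Cnorm2 t * (1 - Cnorm2 (u n)))
   + (Re t * (2 * (Im (d n) - Im lam) * Im (u n)) - Im t * (2 * (Im (d n) - Im lam) * Re (u n)))
   + Cnorm2 t * (Re (d n) - Re lam).
Proof.
  intro E. pose proof (eig_re _ _ _ _ E) as e1. pose proof (eig_im _ _ _ _ E) as e2.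
  unfold X0, X1, alf, Cnorm2; simpl. rewrite e1, e2. ring.
Qed.

Lemma key_im d lam u n t : Jop d u n = Cmul lam (u n) ->
  Cnorm2 (alf t (u n)) * Im lam + Im (X0 (alf t (u n)) t lam d u n)
   + Im (X1 (alf t (u n)) t u (n+1)) + Im (X1 (alf t (u n)) t u (n-1)) =
  Im lam * (1 + Cnorm2 t * (1 - Cnorm2 (u n)))
   + (Re t * (2 * (Im (d n) - Im lam) * Re (u n)) + Im t * (2 * (Im (d n) - Im lam) * Im (u n)))
   + Cnorm2 t * ((Im (d n) - Im lam) - 2 * (Im (d n) - Im lam) * Cnorm2 (u n)).
Proof.
  intro E. pose proof (eig_re _ _ _ _ E) as e1. pose proof (eig_im _ _ _ _ E) as e2.
  unfold X0, X1, alf, Cnorm2; simpl. rewrite e1, e2. ring.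
Qed.

Lemma sq_sum_le x y : (x - y)^2 <= 2 * x^2 + 2 * y^2.
Proof. simpl. pose proof (Rle_0_sqr (x+y)). unfold Rsqr in *. nra. Qed.

Lemma solve_t (a1 a2 c1 c2 s : R) : 0 < a1*a1 + a2*a2 ->
  exists del, 0 < del /\ forall z1 z2, z1*z1 + z2*z2 < del ->
  exists t : Cpx, exists rho, Cnorm2 t = rho /\ 0 < 1 + rho * s /\
    Re t * a1 - Im t * a2 = z1 * (1 + rho * s) - rho * c1 /\
    Re t * a2 + Im t * a1 = z2 * (1 + rho * s) - rho * c2.
Proof.
  intro HA. set (nA := a1*a1 + a2*a2) in *. set (K := c1*c1 + c2*c2).
  assert (Kp : 0 <= K) by (unfold K; nra).
  assert (s2 : 0 < s*s + 2) by nra.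
  exists (Rmin (nA / (20 * (s*s + 2))) (nA * nA / (32 * K + 1))). split.
  { apply Rmin_pos; apply Rdiv_lt_0_compat; nra. }
  intros z1 z2 Hz. set (Z2 := z1*z1 + z2*z2) in *.
  assert (Z2p : 0 <= Z2) by (unfold Z2; nra).
  assert (Hz1 : Z2 < nA / (20 * (s*s + 2))) by (eapply Rlt_le_trans; [exact Hz| apply Rmin_l]).
  assert (Hz2 : Z2 < nA * nA / (32 * K + 1)) by (eapply Rlt_le_trans; [exact Hz| apply Rmin_r]).
  apply Rmult_lt_compat_r with (r := 20 * (s*s+2)) in Hz1; [|nra].
  apply Rmult_lt_compat_r with (r := 32 * K + 1) in Hz2; [|nra].
  replace (nA / (20 * (s * s + 2)) * (20 * (s * s + 2))) with nA in Hz1 by (field; nra).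
  replace (nA * nA / (32 * K + 1) * (32 * K + 1)) with (nA * nA) in Hz2 by (field; nra).
  set (r1 := 4 * Z2 / nA).
  assert (r1p : 0 <= r1) by (unfold r1; apply Rmult_le_pos; [lra| left; apply Rinv_0_lt_compat; lra]).
  assert (r1nA : r1 * nA = 4 * Z2) by (unfold r1; field; lra).
  assert (F1 : r1 * (s*s+2) <= 1/5).
  { apply Rmult_le_reg_r with nA; [lra|]. replace (r1 * (s*s+2) * nA) with (r1 * nA * (s*s+2)) by ring.
    rewrite r1nA. nra. }
  assert (F3 : 2 * (r1 * r1) * K <= Z2).
  { apply Rmult_le_reg_r with (nA * nA); [nra|].
    replace (2 * (r1 * r1) * K * (nA * nA)) with (2 * (r1 * nA) * (r1 * nA) * K) by ring.
    rewrite r1nA. nra. }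
  set (Hf := fun r => ((z1 * (1 + r*s) - r*c1)^2 + (z2*(1+r*s) - r*c2)^2)/nA - r).
  assert (Hc : continuity Hf) by (unfold Hf; reg).
  assert (H0 : 0 <= Hf 0).
  { unfold Hf. replace (0 * s) with 0 by ring. apply Rle_trans with (Z2 / nA - 0).
    - assert (0 <= Z2/nA) by (unfold Rdiv; apply Rmult_le_pos; [lra|left; apply Rinv_0_lt_compat; lra]). lra.
    - right. unfold Z2. field. lra. }
  assert (H1 : Hf r1 <= 0).
  { unfold Hf.
    assert (rs : - (1/5) <= r1 * s <= 1/5) by (split; nra).
    assert (q : (1 + r1*s)^2 <= 36/25) by nra.
    pose proof (sq_sum_le (z1 * (1 + r1*s)) (r1*c1)).
    pose proof (sq_sum_le (z2 * (1 + r1*s)) (r1*c2)).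
    assert (qq : (z1 * (1 + r1*s))^2 + (z2 * (1 + r1*s))^2 <= 36/25 * Z2).
    { replace ((z1 * (1 + r1*s))^2 + (z2 * (1 + r1*s))^2) with (Z2 * (1+r1*s)^2) by (unfold Z2; ring). nra. }
    assert (num : (z1 * (1 + r1 * s) - r1 * c1) ^ 2 + (z2 * (1 + r1 * s) - r1 * c2) ^ 2 <= r1 * nA).
    { rewrite r1nA. unfold K in F3. nra. }
    apply Rle_minus. apply Rmult_le_reg_r with nA; [lra|].
    unfold Rdiv. rewrite Rmult_assoc, Rinv_l by lra. lra. }
  destruct (IVT_cor Hf 0 r1 Hc r1p) as [rho [[rl ru] Hr]]. { nra. }
  set (P1 := z1 * (1 + rho*s) - rho*c1). set (P2 := z2 * (1 + rho*s) - rho*c2).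
  exists (mkC ((P1*a1 + P2*a2)/nA) ((P2*a1 - P1*a2)/nA)), rho.
  assert (rs : - (1/5) <= rho * s <= 1/5).
  { assert (rho * (s*s+2) <= 1/5) by nra. split; nra. }
  repeat split; simpl.
  - unfold Hf in Hr. fold P1 P2 in Hr. unfold Cnorm2; simpl.
    apply Rminus_diag_uniq in Hr. rewrite <- Hr. unfold nA in *. field. lra.
  - lra.
  - unfold nA, P1, P2 in *; field; lra.
  - unfold nA, P1, P2 in *; field; lra.
Qed.

Lemma Re_Cadd a b : Re (Cadd a b) = Re a + Re b. Proof. reflexivity. Qed.
Lemma Im_Cadd a b : Im (Cadd a b) = Im a + Im b. Proof. reflexivity. Qed.
Lemma Re_Crs a b : Re (Crs a b) = a * Re b. Proof. reflexivity. Qed.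
Lemma Im_Crs a b : Im (Crs a b) = a * Im b. Proof. reflexivity. Qed.

Lemma core_unit d lam u n : unit_l2 u -> (forall k, Jop d u k = Cmul lam (u k)) ->
  u n <> C0 -> Im (d n) <> Im lam -> interiorC (NumRange d) lam.
Proof.
  intros Hu E Hn HD.
  assert (HA : 0 < (2 * (Im (d n) - Im lam) * Im (u n)) * (2 * (Im (d n) - Im lam) * Im (u n))
                 + (2 * (Im (d n) - Im lam) * Re (u n)) * (2 * (Im (d n) - Im lam) * Re (u n))).
  { pose proof (Cnorm2_pos _ Hn) as P. unfold Cnorm2 in P.
    assert (0 < (Im (d n) - Im lam) * (Im (d n) - Im lam)).
    { assert (Im (d n) - Im lam <> 0) by lra. nra. }
    replace (2 * (Im (d n) - Im lam) * Im (u n) * (2 * (Im (d n) - Im lam) * Im (u n)) +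
      2 * (Im (d n) - Im lam) * Re (u n) * (2 * (Im (d n) - Im lam) * Re (u n))) with
      (4 * ((Im (d n) - Im lam) * (Im (d n) - Im lam)) * (Re (u n) * Re (u n) + Im (u n) * Im (u n))) by ring.
    nra. }
  destruct (solve_t _ _ (Re (d n) - Re lam) ((Im (d n) - Im lam) - 2 * (Im (d n) - Im lam) * Cnorm2 (u n))
             (1 - Cnorm2 (u n)) HA) as [del [Hdel Hsol]].
  exists (sqrt del). split. { apply sqrt_lt_R0; auto. }
  intros w Hw.
  assert (Hz : (Re w - Re lam) * (Re w - Re lam) + (Im w - Im lam) * (Im w - Im lam) < del).
  { unfold Cdist in Hw. apply sqrt_lt_0_alt.
    replace ((Re w - Re lam) * (Re w - Re lam) + (Im w - Im lam) * (Im w - Im lam))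
      with ((Re lam - Re w) ^ 2 + (Im lam - Im w) ^ 2) by ring. exact Hw. }
  destruct (Hsol _ _ Hz) as [t [rho [Ht [HN [HtA1 HtA2]]]]].
  set (c := / sqrt (1 + rho * (1 - Cnorm2 (u n)))).
  assert (Hcc : c * c = / (1 + rho * (1 - Cnorm2 (u n)))).
  { unfold c. rewrite <- Rinv_mult, sqrt_sqrt by lra. reflexivity. }
  exists (ypert c (alf t (u n)) t u n). split.
  - unfold unit_l2. eapply Zsum_val. eapply Zsum_ext.
    2: apply (Zsum1 _ _ (c*c*Cnorm2 (alf t (u n))) n
              (fun k => c*c*(2*Re (Cmul (Cmul (alf t (u n)) (u k)) (Cconj t)) + Cnorm2 t)) Hu).
    + intro k. rewrite norm_decomp. reflexivity.
    + replace (c * c * Cnorm2 (alf t (u n)) * 1 +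
        c * c * (2 * Re (Cmul (Cmul (alf t (u n)) (u n)) (Cconj t)) + Cnorm2 t))
      with (c * c * (Cnorm2 (alf t (u n)) + 2 * Re (Cmul (Cmul (alf t (u n)) (u n)) (Cconj t)) + Cnorm2 t)) by ring.
      rewrite key_norm, Ht, Hcc. field. lra.
  - split.
    + eapply Zsum_val. eapply Zsum_ext.
      2: apply (Zsum3 _ _ (c*c*Cnorm2 (alf t (u n))*Re lam) n (n+1)%Z (n-1)%Z
               (fun k => c*c*Re (X0 (alf t (u n)) t lam d u k))
               (fun k => c*c*Re (X1 (alf t (u n)) t u k))
               (fun k => c*c*Re (X1 (alf t (u n)) t u k)) Hu).
      * intro k. rewrite (inner_decomp d lam u c (alf t (u n)) t n E k).
        rewrite !Re_Cadd, !Re_ifs, !Re_Crs.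
        destruct (Z.eq_dec k n); destruct (Z.eq_dec k (n+1)); destruct (Z.eq_dec k (n-1));
        rewrite ?Re_Crs; ring.
      * replace (c * c * Cnorm2 (alf t (u n)) * Re lam * 1 + c * c * Re (X0 (alf t (u n)) t lam d u n) +
          c * c * Re (X1 (alf t (u n)) t u (n + 1)) + c * c * Re (X1 (alf t (u n)) t u (n - 1)))
        with (c * c * (Cnorm2 (alf t (u n)) * Re lam + Re (X0 (alf t (u n)) t lam d u n) +
          Re (X1 (alf t (u n)) t u (n + 1)) + Re (X1 (alf t (u n)) t u (n - 1)))) by ring.
        rewrite (key_re d lam u n t (E n)). rewrite HtA1, Ht, Hcc. field. lra.
    + eapply Zsum_val. eapply Zsum_ext.
      2: apply (Zsum3 _ _ (c*c*Cnorm2 (alf t (u n))*Im lam) n (n+1)%Z (n-1)%Z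
               (fun k => c*c*Im (X0 (alf t (u n)) t lam d u k))
               (fun k => c*c*Im (X1 (alf t (u n)) t u k))
               (fun k => c*c*Im (X1 (alf t (u n)) t u k)) Hu).
      * intro k. rewrite (inner_decomp d lam u c (alf t (u n)) t n E k).
        rewrite !Im_Cadd, !Im_ifs, !Im_Crs.
        destruct (Z.eq_dec k n); destruct (Z.eq_dec k (n+1)); destruct (Z.eq_dec k (n-1));
        rewrite ?Im_Crs; ring.
      * replace (c * c * Cnorm2 (alf t (u n)) * Im lam * 1 + c * c * Im (X0 (alf t (u n)) t lam d u n) +
          c * c * Im (X1 (alf t (u n)) t u (n + 1)) + c * c * Im (X1 (alf t (u n)) t u (n - 1)))
        with (c * c * (Cnorm2 (alf t (u n)) * Im lam + Im (X0 (alf t (u n)) t lam d u n) +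
          Im (X1 (alf t (u n)) t u (n + 1)) + Im (X1 (alf t (u n)) t u (n - 1)))) by ring.
        rewrite (key_im d lam u n t (E n)). rewrite HtA2, Ht, Hcc. field. lra.
Qed.

Lemma core d lam u n : in_l2 u -> (forall k, Jop d u k = Cmul lam (u k)) ->
  ~ interiorC (NumRange d) lam -> u n <> C0 -> Im (d n) = Im lam.
Proof.
  intros Hl E Hni Hn. destruct (normalize d lam u n Hl E Hn) as [v [Hv [Ev Hvn]]].
  destruct (Req_dec (Im (d n)) (Im lam)) as [h|h]; auto. exfalso.
  apply Hni. exact (core_unit d lam v n Hv Ev Hvn h).
Qed.

Theorem mainTheorem8 (d : Z -> Cpx) (Hd : bounded_seq d) (lam : Cpx)
  (Hlam : boundary_eigenvalue d lam) :
  (forall n : Z, Im (d n) = Im lam \/ Im (d (n + 1)%Z) = Im lam) /\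
  (forall mu : Cpx, boundary_eigenvalue d mu -> Im mu = Im lam).
Proof.
  destruct Hlam as [[u [Hl2 [Hnz E]]] [_ Hni]].
  split.
  - intro n. destruct (one_of_two d lam u n E Hnz) as [h|h].
    + left. exact (core d lam u n Hl2 E Hni h).
    + right. exact (core d lam u (n+1)%Z Hl2 E Hni h).
  - intros mu [[v [Hv2 [Hvnz Ev]]] [_ Hvni]].
    destruct (exists_pair d lam u Hl2 E Hnz) as [n [h1 h2]].
    pose proof (core d lam u n Hl2 E Hni h1) as i1.
    pose proof (core d lam u (n+1)%Z Hl2 E Hni h2) as i2.
    destruct (one_of_two d mu v n Ev Hvnz) as [h|h].
    + rewrite <- (core d mu v n Hv2 Ev Hvni h). exact i1.
    + rewrite <- (core d mu v (n+1)%Z Hv2 Ev Hvni h). exact i2.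
Qed.
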